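(* For every $a\leq 0$ there exists a divergent series of positive real terms $\sum_{n=1}^{\infty}x_n$ such that $\{\sum_{n=1}^{\infty}(x_n-x_{\sigma(n)}) : \sigma\in S_\infty,\ \sum_{n=1}^{\infty}(x_n-x_{\sigma(n)})\text{ converges}\}=[a,\infty)$.
   Context: $S_\infty$ denotes the set of all permutations of $\mathbb{N}$. *)

(* Defs.v *)
From Stdlib Require Import Reals.
Open Scope R_scope.

Definition is_perm (sigma : nat -> nat) : Prop :=
  (forall m n : nat, sigma m = sigma n -> m = n) /\
  (forall m : nat, exists n : nat, sigma n = m).

(* Main.v *)
Require Import Defs.
From Stdlib Require Import Reals Lra Lia List Permutation ConstructiveEpsilon Classical.
Open Scope R_scope.

Definition h (n : nat) : R := / INR (S n).

Lemma INR_S_pos n : 0 < INR (S n).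
Proof. apply lt_0_INR; lia. Qed.

Lemma h_pos n : 0 < h n.
Proof. unfold h. apply Rinv_0_lt_compat, INR_S_pos. Qed.

Lemma h_anti m n : (m <= n)%nat -> h n <= h m.
Proof.
  intros H. unfold h. apply Rinv_le_contravar. apply INR_S_pos.
  apply le_INR; lia.
Qed.

Lemma h_far n k : (2 * n + 1 <= k)%nat -> h k <= h n / 2.
Proof.
  intros H. apply Rle_trans with (h (2*n+1)). apply h_anti; auto.
  unfold h. replace (S (2*n+1)) with (2 * S n)%nat by lia.
  rewrite mult_INR. simpl (INR 2). pose proof (INR_S_pos n).
  right. field. lra.
Qed.

Lemma h_small eps : 0 < eps -> exists M, forall k, (M <= k)%nat -> h k < eps.
Proof.
  intros He. destruct (INR_archimed eps 1 He) as [M HM].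
  exists M. intros k Hk. unfold h.
  assert (INR M <= INR (S k)) by (apply le_INR; lia).
  pose proof (INR_S_pos k).
  apply Rmult_lt_reg_l with (INR (S k)); auto.
  rewrite Rinv_r by lra. nra.
Qed.

Fixpoint psum (f : nat -> R) (n : nat) : R :=
  match n with O => 0 | S n' => psum f n' + f n' end.

Lemma psum_ext f g n : (forall k, (k < n)%nat -> f k = g k) -> psum f n = psum g n.
Proof.
  induction n; simpl; auto. intros H. rewrite IHn by (intros; apply H; lia).
  rewrite H by lia. auto.
Qed.

Lemma psum_minus f g n : psum (fun k => f k - g k) n = psum f n - psum g n.
Proof. induction n; simpl; [lra|rewrite IHn; lra]. Qed.

Lemma psum_plus f g n : psum (fun k => f k + g k) n = psum f n + psum g n.
Proof. induction n; simpl; [lra|rewrite IHn; lra]. Qed.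

Lemma sum_f_R0_psum f n : sum_f_R0 f n = psum f (S n).
Proof. induction n; simpl; [lra|]. rewrite IHn. simpl. lra. Qed.

Lemma psum_h_mono m n : (m <= n)%nat -> psum h m <= psum h n.
Proof.
  induction 1; [lra|]. simpl. pose proof (h_pos m0). lra.
Qed.

Lemma psum_h_block m k : psum h (m + k) - psum h m >= INR k * h (m + k - 1).
Proof.
  induction k.
  - simpl. rewrite Nat.add_0_r. lra.
  - replace (m + S k)%nat with (S (m + k)) by lia. simpl psum.
    rewrite S_INR.
    assert (h (S (m + k) - 1) <= h (m + k - 1)) by (apply h_anti; lia).
    replace (S (m+k) - 1)%nat with (m+k)%nat in * by lia.
    assert (0 <= INR k) by apply pos_INR.
    assert (0 <= INR k * (h (m + k - 1) - h (m+k))) by (apply Rmult_le_pos; lra).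
    lra.
Qed.

Lemma psum_h_double m : (1 <= m)%nat -> psum h (2*m) >= psum h m + / 2.
Proof.
  intros Hm. pose proof (psum_h_block m m) as H.
  replace (m + m)%nat with (2*m)%nat in H by lia.
  assert (Hh : h (2*m-1) = / (2 * INR m)).
  { unfold h. replace (S (2*m-1)) with (2*m)%nat by lia. rewrite mult_INR. reflexivity. }
  rewrite Hh in H. simpl (INR 2) in H.
  assert (0 < INR m) by (apply lt_0_INR; lia).
  replace (INR m * / (2 * INR m)) with (/2) in H by (field; lra). lra.
Qed.

Lemma psum_h_pow N : psum h (2 ^ N) >= INR N / 2.
Proof.
  induction N.
  - simpl. pose proof (h_pos 0). lra.
  - rewrite Nat.pow_succ_r'. rewrite S_INR.
    assert (1 <= 2 ^ N)%nat by (apply Nat.le_succ_l, Nat.neq_0_lt_0, Nat.pow_nonzero; lia).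
    pose proof (psum_h_double (2^N) H). lra.
Qed.

Lemma psum_h_unbounded M : exists n, forall k, (n <= k)%nat -> psum h k > M.
Proof.
  destruct (INR_archimed 1 (2*M) Rlt_0_1) as [N HN].
  exists (2^N)%nat. intros k Hk. pose proof (psum_h_pow N).
  pose proof (psum_h_mono _ _ Hk). lra.
Qed.

Lemma pigeon N (g : nat -> nat) :
  (forall i j, (i <= N)%nat -> (j <= N)%nat -> g i = g j -> i = j) ->
  exists m, (m <= N)%nat /\ (N <= g m)%nat.
Proof.
  intros Hinj. apply NNPP. intros Hn.
  assert (Hall : forall m, (m <= N)%nat -> (g m < N)%nat).
  { intros m Hm. destruct (Nat.lt_ge_cases (g m) N); auto. exfalso; apply Hn; eauto. }
  assert (HD : NoDup (map g (seq 0 (S N)))).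
  { apply NoDup_map_NoDup_ForallPairs; [|apply seq_NoDup].
    intros x y Hx Hy. apply in_seq in Hx, Hy. apply Hinj; lia. }
  assert (Hi : incl (map g (seq 0 (S N))) (seq 0 N)).
  { intros y Hy. apply in_map_iff in Hy. destruct Hy as [x [<- Hx]].
    apply in_seq in Hx. apply in_seq. specialize (Hall x). lia. }
  pose proof (NoDup_incl_length HD Hi). rewrite length_map, !length_seq in H. lia.
Qed.

Lemma psum_update (f : nat -> R) N m v :
  (m < N)%nat ->
  psum (fun k => if Nat.eqb k m then v else f k) N = psum f N - f m + v.
Proof.
  induction N; intros Hm; [lia|]. simpl.
  destruct (Nat.eq_dec m N).
  - subst. rewrite Nat.eqb_refl.
    rewrite (psum_ext _ f) by (intros k Hk; destruct (Nat.eqb_spec k N); [lia|auto]). lra.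
  - rewrite IHN by lia. destruct (Nat.eqb_spec N m); [lia|]. lra.
Qed.

Lemma psum_inj_le N : forall g : nat -> nat,
  (forall i j, (i < N)%nat -> (j < N)%nat -> g i = g j -> i = j) ->
  psum (fun k => h (g k)) N <= psum h N.
Proof.
  induction N; intros g Hinj; simpl; [lra|].
  destruct (pigeon N g) as [m [Hm HgM]].
  { intros i j Hi Hj; apply Hinj; lia. }
  assert (Hhm : h (g m) <= h N) by (apply h_anti; auto).
  destruct (Nat.eq_dec m N).
  - subst. specialize (IHN g). assert (psum (fun k => h (g k)) N <= psum h N).
    { apply IHN. intros; apply Hinj; lia. } lra.
  - set (g' := fun k => if Nat.eqb k m then g N else g k).
    assert (Hg' : psum (fun k => h (g' k)) N <= psum h N).
    { apply IHN. intros i j Hi Hj. unfold g'.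
      destruct (Nat.eqb_spec i m); destruct (Nat.eqb_spec j m); intros E.
      - lia.
      - apply Hinj in E; lia.
      - apply Hinj in E; lia.
      - apply Hinj in E; lia. }
    assert (E : psum (fun k => h (g' k)) N = psum (fun k => h (g k)) N - h (g m) + h (g N)).
    { rewrite <- (psum_update (fun k => h (g k)) N m (h (g N))) by lia. apply psum_ext.
      intros k _. unfold g'. destruct (Nat.eqb k m); auto. }
    lra.
Qed.

Definition listmax (l : list nat) : nat := fold_right Nat.max 0%nat l.

Lemma listmax_ge x l : In x l -> (x <= listmax l)%nat.
Proof.
  induction l; simpl; [tauto|]. intros [->|H]; [lia|]. specialize (IHl H). lia.
Qed.

Fixpoint next_free (L : list nat) (k fuel : nat) : nat :=
  match fuel with
  | O => k
  | S f => if in_dec Nat.eq_dec k L then next_free L (S k) f else k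
  end.

Lemma next_free_spec L fuel : forall k,
  (listmax L < k + fuel)%nat ->
  let r := next_free L k fuel in
  ~ In r L /\ (k <= r)%nat /\ (forall j, (k <= j < r)%nat -> In j L).
Proof.
  induction fuel; intros k Hk; simpl.
  - split; [|split; [lia|intros; lia]]. intros Hin. apply listmax_ge in Hin. lia.
  - destruct (in_dec Nat.eq_dec k L) as [Hin|Hnin].
    + destruct (IHfuel (S k)) as [H1 [H2 H3]]; [lia|].
      split; auto. split; [lia|]. intros j Hj.
      destruct (Nat.eq_dec j k); [subst; auto|]. apply H3; lia.
    + split; auto. split; [lia|]. intros; lia.
Qed.

Definition lsum (l : list nat) : R := fold_right (fun k acc => h k + acc) 0 l.

Definition far (n : nat) (l : list nat) (u : nat) : nat := S (2*n + listmax l + u).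
Definition nf (l : list nat) (u : nat) : nat :=
  next_free (u :: l) (S u) (S (listmax (u :: l))).

Fixpoint st (s : R) (n : nat) : list nat * nat :=
  match n with
  | O => (nil, O)
  | S n' => let p := st s n' in
      if Rlt_dec (psum h n' - lsum (fst p)) s
      then (far n' (fst p) (snd p) :: fst p, snd p)
      else (snd p :: fst p, nf (fst p) (snd p))
  end.

Definition L s n := fst (st s n).
Definition U s n := snd (st s n).
Definition Sv s n := psum h n - lsum (L s n).
Definition pick s n := if Rlt_dec (Sv s n) s then far n (L s n) (U s n) else U s n.

Lemma L_S s n : L s (S n) = pick s n :: L s n.
Proof. unfold L, pick, Sv. simpl. destruct Rlt_dec; reflexivity. Qed.

Lemma U_inc s n : Sv s n < s -> U s (S n) = U s n.
Proof. unfold U, Sv, L. simpl. destruct Rlt_dec; [reflexivity|tauto]. Qed.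

Lemma U_dec s n : s <= Sv s n -> U s (S n) = nf (L s n) (U s n).
Proof. unfold U, Sv, L. simpl. destruct Rlt_dec; [lra|reflexivity]. Qed.

Lemma pick_inc s n : Sv s n < s -> pick s n = far n (L s n) (U s n).
Proof. unfold pick. destruct Rlt_dec; [reflexivity|tauto]. Qed.

Lemma pick_dec s n : s <= Sv s n -> pick s n = U s n.
Proof. unfold pick. destruct Rlt_dec; [lra|reflexivity]. Qed.

Lemma Sv_S s n : Sv s (S n) = Sv s n + h n - h (pick s n).
Proof. unfold Sv. rewrite L_S. simpl. lra. Qed.

Lemma L_length s n : length (L s n) = n.
Proof. induction n; [reflexivity|]. rewrite L_S. simpl. auto. Qed.

Lemma L_In s n x : In x (L s n) <-> exists k, (k < n)%nat /\ pick s k = x.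
Proof.
  induction n.
  - simpl. split; [tauto|]. intros [k [Hk _]]; lia.
  - rewrite L_S. simpl. rewrite IHn. split.
    + intros [<-|[k [Hk E]]]; [exists n; split; auto|exists k; split; auto].
    + intros [k [Hk E]]. destruct (Nat.eq_dec k n); [left; subst; auto|right; exists k; split; auto; lia].
Qed.

Lemma inv s n :
  (forall k, (k < U s n)%nat -> In k (L s n)) /\ ~ In (U s n) (L s n).
Proof.
  induction n.
  - simpl. unfold U, L; simpl. split; [intros; lia|tauto].
  - destruct IHn as [I1 I2].
    destruct (Rlt_dec (Sv s n) s) as [Hl|Hl].
    + rewrite U_inc, L_S, pick_inc by auto. split.
      * intros k Hk. right. auto.
      * simpl. intros [E|E]; [|tauto]. unfold far in E. lia.
    + apply Rnot_lt_le in Hl. rewrite U_dec, L_S, pick_dec by auto.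
      destruct (next_free_spec (U s n :: L s n) (S (listmax (U s n :: L s n))) (S (U s n)))
        as [N1 [N2 N3]]; [lia|].
      unfold nf. split; auto.
      intros k Hk. destruct (Nat.lt_ge_cases k (S (U s n))).
      * destruct (Nat.eq_dec k (U s n)); [left; auto|right; apply I1; lia].
      * apply N3. lia.
Qed.

Lemma pick_notin s n : ~ In (pick s n) (L s n).
Proof.
  unfold pick. destruct Rlt_dec.
  - intros Hin. apply listmax_ge in Hin. unfold far in Hin. lia.
  - apply inv.
Qed.

Lemma L_NoDup s n : NoDup (L s n).
Proof. induction n; [constructor|]. rewrite L_S. constructor; auto. apply pick_notin. Qed.

Lemma U_le s n : (U s n <= n)%nat.
Proof.
  rewrite <- (L_length s n) at 2. rewrite <- (length_seq (U s n) 0).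
  apply NoDup_incl_length; [apply seq_NoDup|]. intros k Hk. apply in_seq in Hk.
  apply inv. lia.
Qed.

Lemma pick_inj s i j : pick s i = pick s j -> i = j.
Proof.
  intros E. destruct (Nat.lt_total i j) as [H|[H|H]]; auto; exfalso.
  - apply (pick_notin s j). apply L_In. exists i; auto.
  - apply (pick_notin s i). apply L_In. exists j; auto.
Qed.

Lemma U_step s n : (U s n <= U s (S n))%nat /\ (s <= Sv s n -> (U s n < U s (S n))%nat).
Proof.
  destruct (Rlt_dec (Sv s n) s) as [Hl|Hl].
  - rewrite U_inc by auto. split; [lia|lra].
  - apply Rnot_lt_le in Hl. rewrite U_dec by auto.
    destruct (next_free_spec (U s n :: L s n) (S (listmax (U s n :: L s n))) (S (U s n)))
        as [N1 [N2 N3]]; [lia|]. unfold nf. split; intros; lia.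
Qed.

Lemma U_mono s m n : (m <= n)%nat -> (U s m <= U s n)%nat.
Proof. induction 1; auto. pose proof (U_step s m0). lia. Qed.

Lemma step_inc s n : Sv s n < s -> Sv s n + h n / 2 <= Sv s (S n) <= Sv s n + h n.
Proof.
  intros Hl. rewrite Sv_S, pick_inc by auto.
  assert (h (far n (L s n) (U s n)) <= h n / 2) by (apply h_far; unfold far; lia).
  pose proof (h_pos (far n (L s n) (U s n))). lra.
Qed.

Lemma step_dec s n : s <= Sv s n -> Sv s n - h (U s n) <= Sv s (S n) <= Sv s n.
Proof.
  intros Hl. rewrite Sv_S, pick_dec by auto.
  assert (h n <= h (U s n)) by (apply h_anti, U_le). pose proof (h_pos n). lra.
Qed.

Lemma dec_often s n0 : exists n, (n0 <= n)%nat /\ s <= Sv s n.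
Proof.
  apply NNPP. intros Hn.
  assert (Hall : forall n, (n0 <= n)%nat -> Sv s n < s).
  { intros n Hn0. destruct (Rlt_dec (Sv s n) s); auto. exfalso. apply Hn.
    exists n; split; auto. apply Rnot_lt_le; auto. }
  assert (Hk : forall k, Sv s (n0 + k) >= Sv s n0 + (psum h (n0 + k) - psum h n0) / 2).
  { induction k.
    - rewrite Nat.add_0_r. lra.
    - replace (n0 + S k)%nat with (S (n0 + k)) by lia.
      pose proof (step_inc s (n0 + k) (Hall (n0+k)%nat ltac:(lia))). simpl psum. lra. }
  destruct (psum_h_unbounded (2 * (s - Sv s n0) + psum h n0)) as [N HN].
  specialize (HN (n0 + N)%nat ltac:(lia)). specialize (Hk N).
  specialize (Hall (n0 + N)%nat ltac:(lia)). lra.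
Qed.

Lemma U_unbounded s m : exists n, (m < U s n)%nat.
Proof.
  induction m.
  - destruct (dec_often s 0) as [n [_ Hn]]. exists (S n).
    pose proof (U_step s n) as [_ H]. specialize (H Hn). lia.
  - destruct IHm as [n Hn]. destruct (dec_often s n) as [n' [Hn' Hd]].
    exists (S n'). pose proof (U_step s n') as [_ H]. specialize (H Hd).
    pose proof (U_mono s _ _ Hn'). lia.
Qed.

Lemma pick_surj s m : exists n, pick s n = m.
Proof.
  destruct (U_unbounded s m) as [n Hn].
  assert (In m (L s n)) by (apply inv; auto).
  apply L_In in H. destruct H as [k [_ E]]. eauto.
Qed.

Lemma pick_perm s : is_perm (pick s).
Proof. split; [apply pick_inj|apply pick_surj]. Qed.

Lemma lsum_app l l' : lsum (l ++ l') = lsum l + lsum l'.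
Proof. induction l; simpl; [lra|]. rewrite IHl. lra. Qed.

Lemma lsum_perm l l' : Permutation l l' -> lsum l = lsum l'.
Proof. induction 1; simpl; lra. Qed.

Lemma lsum_seq n : lsum (seq 0 n) = psum h n.
Proof. induction n; [reflexivity|]. rewrite seq_S, lsum_app, IHn. simpl. lra. Qed.

Lemma lsum_L s n : lsum (L s n) = psum (fun k => h (pick s k)) n.
Proof. induction n; [reflexivity|]. rewrite L_S. simpl. rewrite IHn. lra. Qed.

Lemma always_dec_zero s n0 :
  (forall n, (n0 <= n)%nat -> s <= Sv s n) -> exists n, (n0 <= n)%nat /\ Sv s n = 0.
Proof.
  intros Hall. destruct (U_unbounded s (listmax (L s n0))) as [n1 Hn1].
  set (n := Nat.max n0 n1). exists n. split; [lia|].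
  assert (Hlt : forall x, In x (L s n) -> (x < U s n)%nat).
  { intros x Hx. apply L_In in Hx. destruct Hx as [k [Hk <-]].
    destruct (Nat.lt_ge_cases k n0).
    - assert (In (pick s k) (L s n0)) by (apply L_In; eauto).
      apply listmax_ge in H0. pose proof (U_mono s n1 n ltac:(lia)). lia.
    - rewrite pick_dec by (apply Hall; lia).
      pose proof (U_step s k) as [_ H1]. specialize (H1 (Hall k H)).
      pose proof (U_mono s (S k) n ltac:(lia)). lia. }
  assert (Hle : (n <= U s n)%nat).
  { rewrite <- (L_length s n) at 1. rewrite <- (length_seq (U s n) 0).
    apply NoDup_incl_length; [apply L_NoDup|]. intros x Hx. apply in_seq.
    apply Hlt in Hx. lia. }
  pose proof (U_le s n).
  assert (Hp : Permutation (L s n) (seq 0 n)).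
  { apply NoDup_Permutation; [apply L_NoDup|apply seq_NoDup|].
    intros x. rewrite in_seq. split.
    - intros Hx. apply Hlt in Hx. lia.
    - intros Hx. apply inv. lia. }
  unfold Sv. rewrite (lsum_perm _ _ Hp), lsum_seq. lra.
Qed.

Lemma forward (P : nat -> Prop) N1 :
  (forall n, (N1 <= n)%nat -> P n -> P (S n)) ->
  forall n0, (N1 <= n0)%nat -> P n0 -> forall n, (n0 <= n)%nat -> P n.
Proof. intros Hs n0 H0 Hp n Hn. induction Hn; auto. apply Hs; auto. lia. Qed.

Lemma Sv_conv s : 0 <= s ->
  forall eps, 0 < eps -> exists N, forall n, (N <= n)%nat -> Rabs (Sv s n - s) < eps.
Proof.
  intros Hs eps He. set (e := eps / 2).
  destruct (h_small e ltac:(unfold e; lra)) as [M HM].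
  destruct (U_unbounded s M) as [n1 Hn1].
  set (N1 := Nat.max n1 M).
  assert (Hh1 : forall n, (N1 <= n)%nat -> h n < e) by (intros; apply HM; lia).
  assert (Hh2 : forall n, (N1 <= n)%nat -> h (U s n) < e).
  { intros n Hn. apply HM. pose proof (U_mono s n1 n ltac:(lia)). lia. }
  assert (Up : forall n, (N1 <= n)%nat -> Sv s n <= s + e -> Sv s (S n) <= s + e).
  { intros n Hn H. destruct (Rlt_dec (Sv s n) s) as [Hl|Hl].
    - pose proof (step_inc s n Hl). pose proof (Hh1 n Hn). lra.
    - apply Rnot_lt_le in Hl. pose proof (step_dec s n Hl). lra. }
  assert (Lo : forall n, (N1 <= n)%nat -> s - e <= Sv s n -> s - e <= Sv s (S n)).
  { intros n Hn H. destruct (Rlt_dec (Sv s n) s) as [Hl|Hl].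
    - pose proof (step_inc s n Hl). pose proof (h_pos n). lra.
    - apply Rnot_lt_le in Hl. pose proof (step_dec s n Hl). pose proof (Hh2 n Hn). lra. }
  destruct (dec_often s N1) as [nl [Hnl Hl]].
  assert (Hu : exists nu, (N1 <= nu)%nat /\ Sv s nu <= s + e).
  { destruct (classic (exists n, (N1 <= n)%nat /\ Sv s n < s)) as [[n [Hn Hv]]|Hno].
    - exists n. split; auto. unfold e; lra.
    - destruct (always_dec_zero s N1) as [n [Hn Hv]].
      + intros n Hn. destruct (Rlt_dec (Sv s n) s); [exfalso; eauto|lra].
      + exists n. split; auto. unfold e. lra. }
  destruct Hu as [nu [Hnu Hu]].
  exists (Nat.max nl nu). intros n Hn.
  pose proof (forward _ N1 Up nu Hnu Hu n ltac:(lia)).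
  pose proof (forward _ N1 Lo nl Hnl ltac:(unfold e; lra) n ltac:(lia)).
  apply Rabs_def1; unfold e in *; lra.
Qed.

Theorem greedy s : 0 <= s ->
  exists rho, is_perm rho /\ infinite_sum (fun n => h n - h (rho n)) s.
Proof.
  intros Hs. exists (pick s). split; [apply pick_perm|].
  intros eps He. destruct (Sv_conv s Hs eps He) as [N HN].
  exists N. intros n Hn. unfold R_dist. rewrite sum_f_R0_psum, psum_minus.
  rewrite <- lsum_L. apply HN. lia.
Qed.

Lemma infinite_sum_sub f g l1 l2 k :
  infinite_sum f l1 -> infinite_sum g l2 -> (forall n, k n = g n - f n) ->
  infinite_sum k (l2 - l1).
Proof.
  intros Hf Hg Hk eps He.
  destruct (Hf (eps/2) ltac:(lra)) as [N1 H1].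
  destruct (Hg (eps/2) ltac:(lra)) as [N2 H2].
  exists (Nat.max N1 N2). intros n Hn.
  specialize (H1 n ltac:(lia)). specialize (H2 n ltac:(lia)).
  unfold R_dist in *. rewrite !sum_f_R0_psum in *.
  rewrite (psum_ext k (fun n => g n - f n)) by auto. rewrite psum_minus.
  apply Rabs_def2 in H1, H2. apply Rabs_def1; lra.
Qed.

Lemma psum_ge_n (x : nat -> R) : (forall n, 1 <= x n) -> forall m, INR m <= psum x m.
Proof.
  intros Hx m. induction m; [simpl; lra|]. specialize (Hx m). rewrite S_INR. change (psum x (S m)) with (psum x m + x m). lra.
Qed.

Theorem mainTheorem4 :
  forall a : R, a <= 0 ->
  exists x : nat -> R,
    (forall n : nat, 0 < x n) /\
    ~ (exists l : R, infinite_sum x l) /\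
    (forall s : R,
       (exists sigma : nat -> nat,
          is_perm sigma /\ infinite_sum (fun n => x n - x (sigma n)) s)
       <-> a <= s).
Proof.
  intros a Ha.
  destruct (greedy (- a) ltac:(lra)) as [pi [[Pinj Psurj] Psum]].
  exists (fun n => 1 + h (pi n)). split; [|split].
  - intros n. pose proof (h_pos (pi n)). lra.
  - intros [l Hl]. destruct (Hl 1 Rlt_0_1) as [N HN].
    destruct (INR_archimed 1 (l + 1) Rlt_0_1) as [M HM].
    specialize (HN (N + M)%nat ltac:(lia)). unfold R_dist in HN.
    rewrite sum_f_R0_psum in HN.
    pose proof (psum_ge_n (fun n => 1 + h (pi n)) ltac:(intros n; pose proof (h_pos (pi n)); lra) (S (N + M))).
    assert (INR M <= INR (S (N + M))) by (apply le_INR; lia).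
    apply Rabs_def2 in HN. lra.
  - intros s. split.
    + intros [sigma [[Sinj Ssurj] Hs]]. apply Rnot_lt_le. intros Hlt.
      set (eps := (a - s) / 2).
      destruct (Psum eps ltac:(unfold eps; lra)) as [N1 H1].
      destruct (Hs eps ltac:(unfold eps; lra)) as [N2 H2].
      specialize (H1 (Nat.max N1 N2) ltac:(lia)). specialize (H2 (Nat.max N1 N2) ltac:(lia)).
      unfold R_dist in *. rewrite !sum_f_R0_psum in *.
      set (m := S (Nat.max N1 N2)) in *.
      rewrite psum_minus in H1.
      rewrite (psum_ext _ (fun n => h (pi n) - h (pi (sigma n)))) in H2 by (intros; lra).
      rewrite psum_minus in H2.
      pose proof (psum_inj_le m (fun n => pi (sigma n))
                    ltac:(intros i j _ _ E; apply Sinj, Pinj, E)).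
      apply Rabs_def2 in H1, H2. unfold eps in *. lra.
    + intros Has.
      destruct (greedy (s - a) ltac:(lra)) as [rho [[Rinj Rsurj] Rsum]].
      set (iota := fun m => constructive_ground_epsilon_nat (fun n => pi n = m)
                      (fun n => Nat.eq_dec (pi n) m) (Psurj m)).
      assert (Hiota : forall m, pi (iota m) = m).
      { intros m. unfold iota. apply (constructive_ground_epsilon_spec_nat (fun n => pi n = m)). }
      assert (Hiota2 : forall n, iota (pi n) = n) by (intros n; apply Pinj; rewrite Hiota; auto).
      exists (fun n => iota (rho n)). split.
      * split.
        -- intros i j E. apply Rinj. rewrite <- (Hiota (rho i)), <- (Hiota (rho j)), E. auto.
        -- intros m. destruct (Rsurj (pi m)) as [k Hk]. exists k. rewrite Hk. auto.
      * replace s with ((s - a) - (- a)) by ring.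
        apply (infinite_sum_sub (fun n => h n - h (pi n)) (fun n => h n - h (rho n))); auto.
        intros n. rewrite Hiota. ring.
Qed.
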